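(* Consider the random-subspace algorithm described in the context, and suppose that (i) the model Hessians are uniformly bounded, $\|\hat{H}_k\|\leq \kappa_H$ for all $k$, for some $\kappa_H\geq 1$; and (ii) at every iteration the computed step satisfies $$\hat{m}_k(\mathbf{0}) - \hat{m}_k(\hat{\mathbf{s}}_k) \geq \kappa_s \max\left(\|\hat{\mathbf{g}}_k\| \min\left(\Delta_k, \frac{\|\hat{\mathbf{g}}_k\|}{\max(\|\hat{H}_k\|,1)}\right), \hat{\tau}^m_k\Delta_k^2\right)$$ for some $\kappa_s>0$ independent of $k$. If at some iteration $k$ $$\Delta_k \leq c_0\, \hat{\sigma}^m_k, \qquad \text{where} \qquad c_0 := \min\left(\frac{1}{\mu}, \frac{1}{\kappa_H}, \frac{\kappa_s (1-\eta)}{\kappa_{\mathrm{ef}} \Delta_{\max}}, \frac{\kappa_s (1-\eta)}{\kappa_{\mathrm{ef}}}\right),$$ then iteration $k$ is successful, i.e. $R_k\geq \eta$ and $\hat{\sigma}^m_k\geq \mu\Delta_k$.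
   Context: Let $f:\mathbb{R}^n\to\mathbb{R}$. Fix $\mathbf{x}_0\in\mathbb{R}^n$, a subspace dimension $p\in\{1,\ldots,n\}$, radii $0<\Delta_0\leq\Delta_{\max}$, and parameters $0<\gamma_{\mathrm{dec}}<1<\gamma_{\mathrm{inc}}$, $\eta\in(0,1)$, $\mu>0$. For $k=0,1,2,\ldots$ the algorithm: (1) selects a random matrix $P_k\in\mathbb{R}^{n\times p}$; (2) builds a model $\hat{m}_k(\hat{\mathbf{s}}) = f(\mathbf{x}_k)+\hat{\mathbf{g}}_k^T\hat{\mathbf{s}}+\frac12\hat{\mathbf{s}}^T\hat{H}_k\hat{\mathbf{s}}$ ($\hat{\mathbf{g}}_k\in\mathbb{R}^p$, $\hat H_k\in\mathbb{R}^{p\times p}$ symmetric) that is $P_k$-fully quadratic, meaning there are constants $\kappa_{\mathrm{ef}},\kappa_{\mathrm{eg}},\kappa_{\mathrm{eh}}>0$ independent of $k$ with $|f(\mathbf{x}_k+P_k\hat{\mathbf{s}})-\hat m_k(\hat{\mathbf{s}})|\leq\kappa_{\mathrm{ef}}\Delta_k^3$, $\|P_k^T\nabla f(\mathbf{x}_k+P_k\hat{\mathbf{s}})-\nabla\hat m_k(\hat{\mathbf{s}})\|\leq\kappa_{\mathrm{eg}}\Delta_k^2$, $\|P_k^T\nabla^2 f(\mathbf{x}_k+P_k\hat{\mathbf{s}})P_k-\nabla^2\hat m_k(\hat{\mathbf{s}})\|\leq\kappa_{\mathrm{eh}}\Delta_k$ for all $\|\hat{\mathbf{s}}\|\leq\Delta_k$;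 (3) computes a step $\hat{\mathbf{s}}_k\in\mathbb{R}^p$ with $\|\hat{\mathbf{s}}_k\|\leq\Delta_k$ (approximately minimizing $\hat m_k$ on this ball); (4) computes $R_k := \frac{f(\mathbf{x}_k)-f(\mathbf{x}_k+P_k\hat{\mathbf{s}}_k)}{\hat m_k(\mathbf{0})-\hat m_k(\hat{\mathbf{s}}_k)}$; (5) with $\hat\tau^m_k:=\max(-\lambda_{\min}(\hat H_k),0)$ and $\hat\sigma^m_k:=\max(\|\hat{\mathbf{g}}_k\|,\hat\tau^m_k)$, iteration $k$ is successful if $R_k\geq\eta$ and $\hat\sigma^m_k\geq\mu\Delta_k$, in which case $\mathbf{x}_{k+1}=\mathbf{x}_k+P_k\hat{\mathbf{s}}_k$ and $\Delta_{k+1}=\min(\gamma_{\mathrm{inc}}\Delta_k,\Delta_{\max})$; otherwise it is unsuccessful, $\mathbf{x}_{k+1}=\mathbf{x}_k$ and $\Delta_{k+1}=\gamma_{\mathrm{dec}}\Delta_k$. Norms are Euclidean / operator 2-norms. *)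

(* Defs.v *)
From mathcomp Require Import all_boot all_algebra all_classical all_reals all_analysis.
Import numFieldNormedType.Exports.
Import GRing.Theory Num.Theory.
Set Implicit Arguments. Unset Strict Implicit. Unset Printing Implicit Defensive.
Local Open Scope ring_scope.
Local Open Scope classical_set_scope.

Section Defs.
Variable R : realType.

Definition enorm (m : nat) (v : 'cV[R]_m) : R := Num.sqrt (\sum_i (v i 0) ^+ 2).

Definition opnorm (m k : nat) (A : 'M[R]_(m, k)) : R :=
  sup [set enorm (A *m v) | v in [set v : 'cV[R]_k | enorm v <= 1]].

Definition lambda_min (p : nat) (A : 'M[R]_p) : R := inf [set a : R | eigenvalue A a].

Definition qmodel (p : nat) (fx : R) (g : 'cV[R]_p) (H : 'M[R]_p) (s : 'cV[R]_p) : R :=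
  fx + (g^T *m s) 0 0 + 2^-1 * (s^T *m H *m s) 0 0.

Definition tau_m (p : nat) (H : 'M[R]_p) : R := Num.max (- lambda_min H) 0.
Definition sigma_m (p : nat) (g : 'cV[R]_p) (H : 'M[R]_p) : R :=
  Num.max (enorm g) (tau_m H).

Definition ratio (n p : nat) (f : 'cV[R]_n -> R) (x : 'cV[R]_n) (P : 'M[R]_(n, p))
  (g : 'cV[R]_p) (H : 'M[R]_p) (s : 'cV[R]_p) : R :=
  (f x - f (x + P *m s)) / (qmodel (f x) g H 0 - qmodel (f x) g H s).

Definition successful (n p : nat) (f : 'cV[R]_n -> R) (eta mu : R) (x : 'cV[R]_n)
  (P : 'M[R]_(n, p)) (g : 'cV[R]_p) (H : 'M[R]_p) (s : 'cV[R]_p) (Delta : R) : Prop :=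
  eta <= ratio f x P g H s /\ mu * Delta <= sigma_m g H.

End Defs.

(* Main.v *)
Require Import Defs.
From mathcomp Require Import all_boot all_order all_algebra all_classical all_reals all_analysis.
From mathcomp Require Import ring lra.
Import numFieldNormedType.Exports.
Import Order.TTheory GRing.Theory Num.Theory.
Local Open Scope ring_scope.


Lemma core (R : realType) (gn tau opn kH mu ks kef eta Dmax Dl D e : R) :
  0 < Dl -> Dl <= Dmax -> 0 <= gn -> 0 <= tau -> 1 <= kH -> opn <= kH ->
  0 < ks -> 0 < kef -> 0 < eta -> eta < 1 -> 0 < mu ->
  D >= ks * Num.max (gn * Num.min Dl (gn / Num.max opn 1)) (tau * Dl ^+ 2) ->
  `|e| <= kef * Dl ^+ 3 ->
  Dl <= Num.min (Num.min (mu^-1) (kH^-1))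
                (Num.min (ks * (1 - eta) / (kef * Dmax)) (ks * (1 - eta) / kef))
        * Num.max gn tau ->
  [/\ 0 < D, e <= (1 - eta) * D & mu * Dl <= Num.max gn tau].
Proof.
move=> Dl0 DlM gn0 tau0 kH1 opnk ks0 kef0 eta0 eta1 mu0 HD He Hc.
set c := Num.min _ _ in Hc.
set sig := Num.max gn tau in Hc *.
have sig0 : 0 <= sig by rewrite le_max gn0.
have Dm0 : 0 < Dmax by lra.
have kH0 : 0 < kH by lra.
have c1 : c <= mu^-1 by rewrite /c !ge_min lexx.
have c2 : c <= kH^-1 by rewrite /c !ge_min lexx orbT.
have c3 : c <= ks * (1 - eta) / (kef * Dmax) by rewrite /c !ge_min lexx !orbT.
have c4 : c <= ks * (1 - eta) / kef by rewrite /c !ge_min lexx !orbT.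
have h1 : mu * Dl <= sig.
  have : Dl <= mu^-1 * sig by apply: le_trans Hc _; exact: ler_wpM2r.
  by rewrite ler_pdivlMl.
have h2 : kH * Dl <= sig.
  have : Dl <= kH^-1 * sig by apply: le_trans Hc _; exact: ler_wpM2r.
  by rewrite ler_pdivlMl.
have h3 : kef * Dmax * Dl <= ks * (1 - eta) * sig.
  have : Dl <= (kef * Dmax)^-1 * (ks * (1 - eta) * sig).
    apply: le_trans Hc _; rewrite mulrA [_^-1 * _]mulrC; exact: ler_wpM2r.
  by rewrite ler_pdivlMl // mulr_gt0.
have h4 : kef * Dl <= ks * (1 - eta) * sig.
  have : Dl <= kef^-1 * (ks * (1 - eta) * sig).
    apply: le_trans Hc _; rewrite mulrA [_^-1 * _]mulrC; exact: ler_wpM2r.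
  by rewrite ler_pdivlMl.
have eabs : e <= kef * Dl ^+ 3 by apply: le_trans (ler_norm e) He.
have [sg|st] := leP tau gn.
- have sigE : sig = gn by rewrite /sig max_l.
  rewrite sigE in h2 h3 h4.
  have m1 : 1 <= Num.max opn 1 by rewrite le_max lexx orbT.
  have mk : Num.max opn 1 <= kH by rewrite ge_max opnk kH1.
  have hm : Dl <= gn / Num.max opn 1.
    rewrite ler_pdivlMr; last lra.
    apply: le_trans (_ : Dl * kH <= gn); last lra.
    by apply: ler_wpM2l; lra.
  have hmin : Num.min Dl (gn / Num.max opn 1) = Dl by rewrite min_l.
  rewrite hmin in HD.
  have HD' : ks * (gn * Dl) <= D.
    apply: le_trans HD; apply: ler_wpM2l; [lra | by rewrite le_max lexx].
  have q : kef * Dl ^+ 2 <= ks * (1 - eta) * gn.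
    apply: le_trans h3; rewrite expr2 mulrA; apply: ler_wpM2r; [lra|].
    by apply: ler_wpM2l; lra.
  have q' : kef * Dl ^+ 3 <= ks * (1 - eta) * gn * Dl.
    by rewrite exprS mulrCA [_ * Dl]mulrC; apply: ler_wpM2l; lra.
  have gpos : 0 < gn by have := mulr_gt0 kH0 Dl0; lra.
  have p0 : 0 < ks * (gn * Dl) by rewrite !mulr_gt0.
  have p1 : (1 - eta) * (ks * (gn * Dl)) <= (1 - eta) * D by apply: ler_wpM2l; lra.
  have p2 : ks * (1 - eta) * gn * Dl = (1 - eta) * (ks * (gn * Dl)) by ring.
  split; [lra | lra | by rewrite sigE in h1 *].
- have sigE : sig = tau by rewrite /sig max_r // ltW.
  rewrite sigE in h4.
  have HD' : ks * (tau * Dl ^+ 2) <= D.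
    apply: le_trans HD; apply: ler_wpM2l; [lra | by rewrite le_max lexx orbT].
  have q' : kef * Dl ^+ 3 <= ks * (1 - eta) * tau * Dl ^+ 2.
    have -> : kef * Dl ^+ 3 = Dl ^+ 2 * (kef * Dl) by ring.
    have -> : ks * (1 - eta) * tau * Dl ^+ 2 = Dl ^+ 2 * (ks * (1 - eta) * tau) by ring.
    by apply: ler_wpM2l; [apply: sqr_ge0 | ].
  have tpos : 0 < tau by lra.
  have D2 : 0 < Dl ^+ 2 by apply: exprn_gt0.
  have p0 : 0 < ks * (tau * Dl ^+ 2) by rewrite !mulr_gt0.
  have p1 : (1 - eta) * (ks * (tau * Dl ^+ 2)) <= (1 - eta) * D by apply: ler_wpM2l; lra.
  have p2 : ks * (1 - eta) * tau * Dl ^+ 2 = (1 - eta) * (ks * (tau * Dl ^+ 2)) by ring.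
  split; [lra | lra | by rewrite sigE in h1 *].
Qed.

Theorem lemma3p5 (R : realType) (n p : nat) (hp : (0 < p)%N) (hpn : (p <= n)%N)
  (f : 'cV[R]_n -> R) (gradf : 'cV[R]_n -> 'cV[R]_n) (hessf : 'cV[R]_n -> 'M[R]_n)
  (x0 : 'cV[R]_n) (Delta0 Deltamax gdec ginc eta mu kef keg keh kH ks : R)
  (x : nat -> 'cV[R]_n) (P : nat -> 'M[R]_(n, p)) (g : nat -> 'cV[R]_p)
  (H : nat -> 'M[R]_p) (s : nat -> 'cV[R]_p) (Delta : nat -> R) :
  (* f is twice differentiable with gradient gradf and Hessian hessf *)
  (forall y v : 'cV[R]_n, is_derive y v f (((gradf y)^T *m v) 0 0)) ->
  (forall y v : 'cV[R]_n, is_derive y v gradf (hessf y *m v)) ->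
  (* parameters *)
  0 < Delta0 -> Delta0 <= Deltamax ->
  0 < gdec -> gdec < 1 -> 1 < ginc -> 0 < eta -> eta < 1 -> 0 < mu ->
  0 < kef -> 0 < keg -> 0 < keh ->
  (* initialisation *)
  x 0%N = x0 -> Delta 0%N = Delta0 ->
  (* models are P_k-fully quadratic *)
  (forall k, (H k)^T = H k) ->
  (forall k (sh : 'cV[R]_p), enorm sh <= Delta k ->
     `|f (x k + P k *m sh) - qmodel (f (x k)) (g k) (H k) sh| <= kef * Delta k ^+ 3
  /\ enorm ((P k)^T *m gradf (x k + P k *m sh) - (g k + H k *m sh)) <= keg * Delta k ^+ 2
  /\ opnorm ((P k)^T *m hessf (x k + P k *m sh) *m P k - H k) <= keh * Delta k) ->
  (* steps stay in the trust region *)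
  (forall k, enorm (s k) <= Delta k) ->
  (* update rules *)
  (forall k, successful f eta mu (x k) (P k) (g k) (H k) (s k) (Delta k) ->
     x k.+1 = x k + P k *m s k /\ Delta k.+1 = Num.min (ginc * Delta k) Deltamax) ->
  (forall k, ~ successful f eta mu (x k) (P k) (g k) (H k) (s k) (Delta k) ->
     x k.+1 = x k /\ Delta k.+1 = gdec * Delta k) ->
  (* (i) bounded model Hessians *)
  1 <= kH -> (forall k, opnorm (H k) <= kH) ->
  (* (ii) sufficient decrease *)
  0 < ks ->
  (forall k,
     qmodel (f (x k)) (g k) (H k) 0 - qmodel (f (x k)) (g k) (H k) (s k) >=
     ks * Num.max (enorm (g k) * Num.min (Delta k) (enorm (g k) / Num.max (opnorm (H k)) 1))
                  (tau_m (H k) * Delta k ^+ 2)) ->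
  forall k,
    Delta k <= Num.min (Num.min (mu^-1) (kH^-1))
                       (Num.min (ks * (1 - eta) / (kef * Deltamax)) (ks * (1 - eta) / kef))
               * sigma_m (g k) (H k) ->
    successful f eta mu (x k) (P k) (g k) (H k) (s k) (Delta k).
Proof.
move=> _ _ D00 D0M gd0 gd1 gi1 eta0 eta1 mu0 kef0 keg0 keh0 _ DeltaE Hsym Hfq Hs Hsucc Hfail kH1 HkH ks0 Hdec.
have inv : forall k, 0 < Delta k /\ Delta k <= Deltamax.
  elim=> [|k [IH1 IH2]]; first by rewrite DeltaE.
  case: (boolp.pselect (successful f eta mu (x k) (P k) (g k) (H k) (s k) (Delta k))) => Hk.
  - have [_ ->] := Hsucc k Hk.
    have gp : 0 < ginc * Delta k by apply: mulr_gt0 => //; lra.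
    split; first by rewrite lt_min gp; lra.
    by rewrite ge_min lexx orbT.
  - have [_ ->] := Hfail k Hk.
    split; first by apply: mulr_gt0.
    have : gdec * Delta k <= Delta k.
      by rewrite -[X in _ <= X]mul1r; apply: ler_wpM2r; lra.
    lra.
move=> k Hk.
have [Dk0 DkM] := inv k.
have q0 : forall fx (gg : 'cV[R]_p) (HH : 'M[R]_p), qmodel fx gg HH 0 = fx.
  move=> fx gg HH; by rewrite /qmodel !mulmx0 !mxE mulr0 !addr0.
have en0 : forall m (v : 'cV[R]_m), 0 <= enorm v by move=> m v; rewrite /enorm sqrtr_ge0.
have tau0 : 0 <= tau_m (H k) by rewrite /tau_m le_max lexx orbT.
have [He _] := Hfq k (s k) (Hs k).
have [Dpos Hle Hmu] := @core R _ _ _ _ _ _ _ _ _ _ _ _ Dk0 DkM (en0 _ (g k)) tau0 kH1 (HkH k) ks0 kef0 eta0 eta1 mu0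
   (Hdec k) He Hk.
split; last exact: Hmu.
rewrite /ratio ler_pdivlMr //.
move: Hle Dpos; rewrite q0; lra.
Qed.
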